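(* Let $n\ge2$ and $q\ge1$ be integers, and for $\theta=(\theta_1,\dots,\theta_{n-1})\in\mathbb{R}^{n-1}$ let $$\Phi(\theta)=\binom n2^{-1}\Big(\sum_{j=1}^{n-1}\cos\theta_j+\sum_{j=2}^{n-1}\sum_{k=1}^{j-1}\cos(\theta_j-\theta_k)\Big).$$ Then for every $\theta\in[-\pi,\pi]^{n-1}$ with $\|\theta\|_\infty>1/\sqrt q$, $$\Phi(\theta)\le1-\frac1{25nq}.$$
   Context: $\Phi$ is the characteristic function of one increment of the $1\times n$ Diaconis–Gangolli walk, restricted to the first $n-1$ coordinates. *)

(* Defs.v *)
From Stdlib Require Import Reals Lra Lia List.
Open Scope R_scope.

(* Finite sum over the integers a, a+1, ..., b (empty if b < a). *)
Definition sum_range (a b : nat) (f : nat -> R) : R :=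
  fold_right Rplus 0 (map f (seq a (S b - a))).

(* theta : nat -> R, only the coordinates theta 1, ..., theta (n-1) matter. *)
Definition Phi (n : nat) (theta : nat -> R) : R :=
  / (INR (n * (n - 1) / 2)) *
  ( sum_range 1 (n - 1) (fun j => cos (theta j))
  + sum_range 2 (n - 1) (fun j =>
      sum_range 1 (j - 1) (fun k => cos (theta j - theta k)))).

Definition sup_norm_gt (n : nat) (theta : nat -> R) (c : R) : Prop :=
  exists j, (1 <= j <= n - 1)%nat /\ c < Rabs (theta j).

(* Main.v *)
Require Import Defs.
From Stdlib Require Import Reals Lra Lia List.
Open Scope R_scope.
Fixpoint s (m : nat) (f : nat -> R) : R :=
  match m with O => 0 | S m' => s m' f + f (S m') end.

Lemma cos_up a : -2 <= a <= 2 -> cos a <= 1 - a^2/2 + a^4/24.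
Proof. intros H. destruct (pre_cos_bound a 0 ltac:(lra) ltac:(lra)) as [_ H2].
  unfold cos_approx, cos_term in H2. simpl in H2. lra. Qed.

Lemma fr_app l x : fold_right Rplus (x + 0) l = fold_right Rplus 0 l + x.
Proof. induction l; simpl; lra. Qed.

Lemma sum_range_S a b f : (a <= S b)%nat ->
  sum_range a (S b) f = sum_range a b f + f (S b).
Proof. intros H. unfold sum_range.
  replace (S (S b) - a)%nat with (S (S b - a)) by lia.
  rewrite seq_S, map_app, fold_right_app.
  replace (a + (S b - a))%nat with (S b) by lia.
  cbn [map fold_right]. apply fr_app. Qed.

Lemma sr1 m f : sum_range 1 m f = s m f.
Proof. induction m. reflexivity. rewrite sum_range_S by lia. rewrite IHm. reflexivity. Qed.

Lemma sr2 m f : (1 <= m)%nat -> sum_range 2 m f = s m f - f 1%nat.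
Proof. induction m; intros H. lia. destruct m. unfold sum_range; simpl; lra.
  rewrite sum_range_S by lia. rewrite IHm by lia. cbn [s]. lra. Qed.

Lemma s_ext m f g : (forall k, (1 <= k <= m)%nat -> f k = g k) -> s m f = s m g.
Proof. induction m; intros H; simpl. lra. rewrite IHm, H. lra. lia. intros; apply H; lia. Qed.

Lemma s_plus m f g : s m (fun k => f k + g k) = s m f + s m g.
Proof. induction m; simpl; lra. Qed.
Lemma s_minus m f g : s m (fun k => f k - g k) = s m f - s m g.
Proof. induction m; simpl; lra. Qed.
Lemma s_scal m c f : s m (fun k => c * f k) = c * s m f.
Proof. induction m; simpl; lra. Qed.
Lemma s_const m c : s m (fun _ => c) = INR m * c.
Proof. induction m; simpl. lra. rewrite IHm. destruct m; simpl; lra. Qed.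
Lemma s_le m f g : (forall k, (1 <= k <= m)%nat -> f k <= g k) -> s m f <= s m g.
Proof. induction m; intros H; simpl. lra. assert (f (S m) <= g (S m)) by (apply H; lia).
  assert (s m f <= s m g) by (apply IHm; intros; apply H; lia). lra. Qed.
Lemma s_term m f i : (1 <= i <= m)%nat -> (forall k, (1 <= k <= m)%nat -> 0 <= f k) -> f i <= s m f.
Proof. induction m; intros Hi H; simpl. lia.
  assert (0 <= s m f). { replace 0 with (s m (fun _ => 0)). apply s_le. intros; apply H; lia.
    rewrite s_const; lra. }
  destruct (Nat.eq_dec i (S m)). subst. lra.
  assert (f i <= s m f) by (apply IHm; [lia| intros; apply H; lia]).
  assert (0 <= f (S m)) by (apply H; lia). lra. Qed.

Lemma s_tri m : s m (fun j => INR (j - 1)) = INR m * (INR m - 1) / 2.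
Proof. induction m; cbn [s]. simpl; lra. rewrite IHm. replace (S m - 1)%nat with m by lia. rewrite S_INR. lra. Qed.

Lemma symm m (b : nat -> nat -> R) : (forall j k, b j k = b k j) ->
  2 * s m (fun j => s (j - 1) (b j)) + s m (fun j => b j j) = s m (fun j => s m (b j)).
Proof. intros Hs. induction m. simpl; lra.
  cbn [s]. replace (S m - 1)%nat with m by lia. rewrite s_plus.
  rewrite (s_ext m (fun k => b k (S m)) (b (S m))) by (intros; apply Hs). lra. Qed.

Lemma tri_nat m : exists t, (S m * m = 2 * t)%nat /\ INR t = INR (S m) * INR m / 2.
Proof. induction m. exists 0%nat. simpl; split; [lia|lra].
  destruct IHm as [t [H1 H2]]. exists (t + S m)%nat. split. nia.
  rewrite plus_INR, H2. rewrite !S_INR. lra. Qed.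

Lemma pair_ineq x y : 1 - cos (x + y) <= 2 * ((1 - cos x) + (1 - cos y)).
Proof.
  assert (E : forall z, 1 - cos z = 2 * sin (z/2) ^ 2).
  { intros z. replace z with (2 * (z/2)) at 1 by field. rewrite cos_2a_sin. lra. }
  rewrite !E. replace ((x+y)/2) with (x/2 + y/2) by field. rewrite sin_plus.
  pose proof (sin2_cos2 (x/2)). pose proof (sin2_cos2 (y/2)). unfold Rsqr in *.
  set (a := sin (x/2)) in *. set (b := sin (y/2)) in *. set (c := cos (x/2)) in *. set (d := cos (y/2)) in *.
  assert (d*d <= 1) by nra. assert (c*c<=1) by nra. assert (0 <= (a*d-c*b)^2) by (apply pow2_ge_0).
  assert (a*a*(d*d) <= a*a) by nra. assert (b*b*(c*c) <= b*b) by nra. nra. Qed.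

Lemma a_bound (q : nat) x : (1 <= q)%nat -> / sqrt (INR q) < Rabs x -> Rabs x <= PI ->
  11 / 24 <= (1 - cos x) * INR q.
Proof. intros Hq Hx Hpi.
  assert (Q1 : 1 <= INR q) by (apply (le_INR 1); lia).
  assert (S1 : 1 <= sqrt (INR q)) by (rewrite <- sqrt_1; apply sqrt_le_1_alt; lra).
  set (t := / sqrt (INR q)) in *.
  assert (T0 : 0 < t) by (apply Rinv_0_lt_compat; lra).
  assert (T1 : t <= 1) by (unfold t; rewrite <- Rinv_1; apply Rinv_le_contravar; lra).
  assert (T2 : t * t * INR q = 1).
  { unfold t. rewrite <- Rinv_mult. rewrite sqrt_sqrt by lra. field. lra. }
  assert (cos x = cos (Rabs x)) by (unfold Rabs; destruct Rcase_abs; [rewrite cos_neg|]; reflexivity).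
  assert (cos (Rabs x) < cos t) by (apply cos_decreasing_1; pose proof PI_RGT_0; pose proof (Rabs_pos x); lra).
  pose proof (cos_up t ltac:(lra)).
  assert (t^4 <= t^2) by (simpl; nra).
  assert (1 - cos x >= 11/24 * t^2) by (simpl in *; lra).
  simpl in *. nra. Qed.

Theorem mainTheorem11 (n q : nat) (theta : nat -> R) :
  (2 <= n)%nat -> (1 <= q)%nat ->
  (forall j, (1 <= j <= n - 1)%nat -> - PI <= theta j <= PI) ->
  sup_norm_gt n theta (/ sqrt (INR q)) ->
  Phi n theta <= 1 - / (25 * INR n * INR q).
Proof.
  intros Hn Hq Hth [j0 [Hj0 Hgt]].
  destruct n as [|m]; [lia|].
  replace (S m - 1)%nat with m in * by lia.
  unfold Phi. replace (S m - 1)%nat with m by lia.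
  rewrite sr1, sr2 by lia.
  replace (sum_range 1 (1 - 1) (fun k => cos (theta 1%nat - theta k))) with 0
    by (unfold sum_range; simpl; reflexivity).
  rewrite (s_ext m (fun j => sum_range 1 (j - 1) (fun k => cos (theta j - theta k))) (fun j => s (j - 1) (fun k => cos (theta j - theta k))))
    by (intros; apply sr1).
  destruct (tri_nat m) as [t [H1 H2]].
  rewrite H1, (Nat.mul_comm 2 t), Nat.div_mul by lia. rewrite H2.
  set (b := fun j k => 1 - cos (theta j - theta k)).
  set (a := fun k => 1 - cos (theta k)).
  assert (Hs : forall j k, b j k = b k j).
  { intros j k; unfold b. replace (theta k - theta j) with (- (theta j - theta k)) by ring.
    rewrite cos_neg; reflexivity. }
  assert (Hb0 : forall j k, 0 <= b j k) by (intros; unfold b; pose proof (COS_bound (theta j - theta k)); lra).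
  assert (Ha0 : forall k, 0 <= a k) by (intros; unfold a; pose proof (COS_bound (theta k)); lra).
  assert (ET : s m (fun j => s (j - 1) (b j)) =
     INR m * (INR m - 1) / 2 - s m (fun j => s (j - 1) (fun k => cos (theta j - theta k)))).
  { rewrite <- s_tri, <- s_minus. apply s_ext. intros j _. unfold b.
    rewrite s_minus, s_const. ring. }
  assert (EA : s m a = INR m - s m (fun j => cos (theta j))).
  { unfold a. rewrite s_minus, s_const. ring. }
  pose proof (symm m b Hs) as Sy.
  rewrite (s_ext m (fun j => b j j) (fun _ => 0)) in Sy by (intros; unfold b; rewrite Rminus_eq_0, cos_0; ring).
  rewrite s_const in Sy.
  assert (R1 : s m (b j0) <= s m (fun j => s m (b j))).
  { apply (s_term m (fun j => s m (b j))). lia. intros k _.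
    replace 0 with (s m (fun _ => 0)) by (rewrite s_const; ring). apply s_le; auto. }
  assert (A0 : 0 <= s m a).
  { replace 0 with (s m (fun _ => 0)) by (rewrite s_const; ring). apply s_le; auto. }
  assert (R2 : s m (fun _ => a j0 / 2) <= s m (fun k => a k + b j0 k)).
  { apply s_le. intros k _. unfold a, b.
    pose proof (pair_ineq (theta k) (theta j0 - theta k)).
    replace (theta k + (theta j0 - theta k)) with (theta j0) in H by ring. lra. }
  rewrite s_const, s_plus in R2.
  assert (AB := a_bound q (theta j0) Hq Hgt ltac:(apply Rabs_le; apply Hth; lia)).
  fold (a j0) in AB.
  set (D := s m a + s m (fun j => s (j - 1) (b j))) in *.
  assert (HD : INR m * a j0 / 4 <= D) by (unfold D; lra).
  assert (M1 : 1 <= INR m) by (apply (le_INR 1); lia).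
  assert (Q1 : 1 <= INR q) by (apply (le_INR 1); lia).
  rewrite S_INR in *.
  set (M := INR m) in *. set (Q := INR q) in *.
  replace (s m (fun j => cos (theta j)) + (s m (fun j => s (j - 1) (fun k => cos (theta j - theta k))) - 0))
    with ((M + 1) * M / 2 - D) by (unfold D; lra).
  assert (N0 : 0 < (M + 1) * M / 2) by nra.
  clearbody D M Q. generalize (a j0) AB HD; intros aj AB2 HD2.
  assert (KEY : (M + 1) * M / 2 <= D * (25 * (M + 1) * Q)).
  { assert (M * (aj * Q) / 4 * (25 * (M+1)) <= D * (25 * (M + 1) * Q)).
    { replace (M * (aj * Q) / 4 * (25 * (M+1))) with ((M * aj / 4) * (25 * (M+1) * Q)) by field.
      apply Rmult_le_compat_r; nra. }
    nra. }
  apply (Rmult_le_reg_l ((M + 1) * M / 2)); auto.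
  rewrite <- Rmult_assoc, Rinv_r by lra.
  apply (Rmult_le_reg_r (25 * (M + 1) * Q)). nra.
  replace (((M + 1) * M / 2) * (1 - / (25 * (M + 1) * Q)) * (25 * (M + 1) * Q))
    with (((M + 1) * M / 2) * (25 * (M + 1) * Q) - (M + 1) * M / 2) by (field; nra).
  lra.
Qed.
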